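(* For every integer $n\ge 5$, up to isomorphism, \[\operatorname{obs}(C_n)=\operatorname{obs}(P_{n-1})\setminus\{C_n\}\quad\text{and}\quad\operatorname{obs}(P_{n-1})=\operatorname{obs}(C_n)\cup\{C_n\}.\]
   Context: All graphs are finite, simple and loopless. $P_n$ and $C_n$ denote the path and cycle on $n$ vertices. A full-homomorphism $\varphi\colon G\to H$ is a map $V(G)\to V(H)$ such that for all $x,y\in V(G)$, $xy\in E(G)$ if and only if $\varphi(x)\varphi(y)\in E(H)$. A full $H$-colouring of $G$ is a full-homomorphism $G\to H$. A minimal $H$-obstruction is a graph $G$ that admits no full $H$-colouring while every proper induced subgraph of $G$ admits one; $\operatorname{obs}(H)$ denotes the set of minimal $H$-obstructions (up to isomorphism). *)

(* Defs.v *)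
From mathcomp Require Import all_boot.
Set Implicit Arguments. Unset Strict Implicit. Unset Printing Implicit Defensive.

Record sgraph := SGraph {
  vtx : finType;
  adj : rel vtx;
  adj_sym : symmetric adj;
  adj_irr : irreflexive adj }.

Section OfRel.
Variables (T : finType) (r : rel T).
Definition sym_rel : rel T := fun x y => (x != y) && (r x y || r y x).
Lemma sym_rel_sym : symmetric sym_rel.
Proof. by move=> x y; rewrite /sym_rel eq_sym orbC. Qed.
Lemma sym_rel_irr : irreflexive sym_rel.
Proof. by move=> x; rewrite /sym_rel eqxx. Qed.
Definition graph_of_rel : sgraph := SGraph sym_rel_sym sym_rel_irr.
End OfRel.

Definition path_graph (m : nat) : sgraph :=
  @graph_of_rel ('I_m : finType) (fun i j => nat_of_ord j == (nat_of_ord i).+1).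

Definition cycle_graph (n : nat) : sgraph :=
  @graph_of_rel ('I_n : finType) (fun i j => nat_of_ord j == ((nat_of_ord i).+1 %% n)).

Definition full_hom (G H : sgraph) (f : vtx G -> vtx H) : Prop :=
  forall x y : vtx G, adj x y = adj (f x) (f y).

Definition full_colourable_on (G H : sgraph) (S : {set vtx G}) : Prop :=
  exists f : vtx G -> vtx H,
    forall x y, x \in S -> y \in S -> adj x y = adj (f x) (f y).

Definition min_obstruction (H G : sgraph) : Prop :=
  ~ (exists f : vtx G -> vtx H, full_hom f) /\
  forall S : {set vtx G}, S \proper [set: vtx G] -> full_colourable_on H S.

Definition graph_iso (G H : sgraph) : Prop :=
  exists f : vtx G -> vtx H, bijective f /\ full_hom f.

(* Main.v *)
Require Import Defs.
From mathcomp Require Import all_boot.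
From mathcomp Require Import zify.
From Stdlib Require Import Classical.
Set Implicit Arguments. Unset Strict Implicit. Unset Printing Implicit Defensive.

Lemma modS (n i : nat) : i < n -> i.+1 %% n = if i.+1 == n then 0 else i.+1.
Proof. move=> lt; case: eqP => [->|ne]; first by rewrite modnn. by rewrite modn_small //; lia. Qed.

Lemma adjCE (n : nat) (i j : 'I_n) : 3 <= n ->
  @adj (cycle_graph n) i j =
  [|| (j : nat) == i.+1, (i : nat) == j.+1, ((i:nat) == 0) && ((j:nat) == n.-1)
   | ((j:nat) == 0) && ((i:nat) == n.-1)].
Proof.
move=> n3; rewrite /= /sym_rel /=.
have hi := ltn_ord i; have hj := ltn_ord j.
rewrite !modS //.
have -> : (i != j) = ((i:nat) != j) by [].
case: ifP => /eqP h1; case: ifP => /eqP h2; apply/idP/idP; lia.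
Qed.

Lemma adjPE (m : nat) (i j : 'I_m) :
  @adj (path_graph m) i j = ((j : nat) == i.+1) || ((i : nat) == j.+1).
Proof.
rewrite /= /sym_rel /=.
have -> : (i != j) = ((i:nat) != j) by [].
apply/idP/idP; lia.
Qed.

Lemma ex_succ n (i : 'I_n) : exists k : 'I_n,
  ((i:nat).+1 < n /\ (k:nat) = i.+1) \/ ((i:nat).+1 = n /\ (k:nat) = 0).
Proof.
have hi := ltn_ord i.
exists (ordS i); rewrite /= modS //; case: ifP => /eqP; lia.
Qed.

Lemma ex_pred n (i : 'I_n) : exists k : 'I_n,
  (0 < i /\ (k:nat) = (i:nat).-1) \/ ((i:nat) = 0 /\ (k:nat) = n.-1).
Proof.
have hi := ltn_ord i.
exists (ord_pred i); rewrite /=.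
case: (i : nat) hi => [|m] hm /=.
  by rewrite add0n modn_small; lia.
rewrite -[X in X %% _]/(m + n) modnDr modn_small; lia.
Qed.

Lemma CN n (i j k l : 'I_n) : 5 <= n -> i != j -> k != l ->
  @adj (cycle_graph n) i k -> @adj (cycle_graph n) j k ->
  @adj (cycle_graph n) i l -> @adj (cycle_graph n) j l -> False.
Proof.
move=> n5; rewrite !adjCE; try lia.
have hi := ltn_ord i; have hj := ltn_ord j; have hk := ltn_ord k; have hl := ltn_ord l.
have -> : (i != j) = ((i:nat) != j) by [].
have -> : (k != l) = ((k:nat) != l) by [].
move: (i:nat) (j:nat) (k:nat) (l:nat) hi hj hk hl => *.
lia.
Qed.

Lemma succ_adj n (i k : 'I_n) : 3 <= n ->
  ((i:nat).+1 < n /\ (k:nat) = i.+1) \/ ((i:nat).+1 = n /\ (k:nat) = 0) ->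
  @adj (cycle_graph n) i k.
Proof. move=> n3 h; rewrite adjCE //; lia. Qed.

Lemma pred_adj n (i k : 'I_n) : 3 <= n ->
  (0 < i /\ (k:nat) = (i:nat).-1) \/ ((i:nat) = 0 /\ (k:nat) = n.-1) ->
  @adj (cycle_graph n) i k.
Proof. move=> n3 h; have := ltn_ord i; rewrite adjCE //; lia. Qed.

Lemma K1 n (i j a : 'I_n) : 5 <= n -> i != j ->
  (forall k : 'I_n, k != a -> @adj (cycle_graph n) i k = @adj (cycle_graph n) j k) -> False.
Proof.
move=> n5 ij H.
have n3 : 3 <= n by lia.
have [k1 e1] := ex_succ i; have [k2 e2] := ex_pred i.
have [k3 e3] := ex_succ j; have [k4 e4] := ex_pred j.
have a1 := succ_adj n3 e1; have a2 := pred_adj n3 e2.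
have a3 := succ_adj n3 e3; have a4 := pred_adj n3 e4.
have hi := ltn_ord i; have hj := ltn_ord j.
have k12 : k1 != k2 by apply/eqP => /(congr1 val) /=; lia.
have k34 : k3 != k4 by apply/eqP => /(congr1 val) /=; lia.
have ji : j != i by rewrite eq_sym.
have [/eqP h1|h1] := boolP (k1 == a); have [/eqP h2|h2] := boolP (k2 == a).
- by move: k12; rewrite h1 h2 eqxx.
- subst a.
  have b2 : @adj (cycle_graph n) j k2 by rewrite -H // eq_sym.
  have [/eqP h3|h3] := boolP (k3 == k1); have [/eqP h4|h4] := boolP (k4 == k1).
  + by move: k34; rewrite h3 h4 eqxx.
  + subst k3. by apply: (CN n5 ij k12).
  + subst k4. by apply: (CN n5 ij k12).
  + by apply: (CN n5 ji k34) => //; rewrite H.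
- subst a.
  have b1 : @adj (cycle_graph n) j k1 by rewrite -H.
  have [/eqP h3|h3] := boolP (k3 == k2); have [/eqP h4|h4] := boolP (k4 == k2).
  + by move: k34; rewrite h3 h4 eqxx.
  + subst k3. by apply: (CN n5 ij k12).
  + subst k4. by apply: (CN n5 ij k12).
  + by apply: (CN n5 ji k34) => //; rewrite H.
- by apply: (CN n5 ij k12) => //; rewrite -H.
Qed.

Lemma pd_inj n (X : sgraph) (g : 'I_n -> vtx X) : 5 <= n ->
  (forall i j, @adj (cycle_graph n) i j = adj (g i) (g j)) -> injective g.
Proof.
move=> n5 H i j eij; apply/eqP; apply/negPn/negP => ne.
apply: (K1 (a := i) n5 ne) => k _; by rewrite !H eij.
Qed.

Lemma nbr_card n (i : 'I_n) : 5 <= n -> #|[set k | @adj (cycle_graph n) i k]| = 2.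
Proof.
move=> n5; have n3 : 3 <= n by lia.
have [k1 e1] := ex_succ i; have [k2 e2] := ex_pred i.
have hi := ltn_ord i.
have k12 : k1 != k2 by apply/eqP => /(congr1 val) /=; lia.
suff -> : [set k | @adj (cycle_graph n) i k] = [set k1; k2] by rewrite cards2 k12.
apply/setP => k; rewrite !inE adjCE //.
have -> : (k == k1) = ((k:nat) == k1) by [].
have -> : (k == k2) = ((k:nat) == k2) by [].
have := ltn_ord k; lia.
Qed.

Section L.
Variables (p : nat) (hp : 3 <= p) (G : sgraph).
Local Notation n := p.+2.
Local Notation C := (cycle_graph p.+2).
Local Notation adjC := (@adj (cycle_graph p.+2)).
Hypothesis mo : min_obstruction C G.
Let n5 : 5 <= n. Proof. lia. Qed.

Definition twin (e : 'I_n -> vtx G) v (j : 'I_n) := forall l, adj v (e l) = adjC j l.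
Definition twinb (e : 'I_n -> vtx G) v (j : 'I_n) := [forall l, adj v (e l) == adjC j l].
Definition gt (e : 'I_n -> vtx G) v : 'I_n := odflt ord0 [pick j | twinb e v j].

Lemma twinP e v j : reflect (twin e v j) (twinb e v j).
Proof. apply: (iffP forallP) => H l; first exact/eqP/H. by rewrite H. Qed.

Lemma twin_uniq e v j j' : twin e v j -> twin e v j' -> j = j'.
Proof.
move=> H H'; apply/eqP/negPn/negP => ne.
apply: (K1 (a := j) n5 ne) => k _; by rewrite -H -H'.
Qed.

Lemma gtP e v j : twin e v j -> gt e v = j.
Proof.
move=> H; rewrite /gt; case: pickP => [j' /twinP H'|none] /=.
  exact: twin_uniq H' H.
by move: (none j) => /twinP.
Qed.

Lemma twin_of e (efull : forall i j, adj (e i) (e j) = adjC i j)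
  (S : {set vtx G}) (Sp : S \proper setT) (eS : forall i, e i \in S) v (vS : v \in S) :
  exists c, twin e v c.
Proof.
have [f fS] := mo.2 S Sp.
have phifull : forall i j, adjC i j = adjC (f (e i)) (f (e j)).
  by move=> i j; rewrite -efull fS.
have phiinj := pd_inj n5 phifull.
have [psi K1' K2'] := injF_bij phiinj.
exists (psi (f v)) => l.
rewrite fS //; transitivity (adjC (f (e (psi (f v)))) (f (e l))).
  by rewrite (K2' (f v)).
by rewrite -fS // efull.
Qed.

Lemma pair_ok e (efull : forall i j, adj (e i) (e j) = adjC i j)
  (S : {set vtx G}) (Sp : S \proper setT) (eS : forall i, e i \in S) u v
  (uS : u \in S) (vS : v \in S) : adj u v = adjC (gt e u) (gt e v).
Proof.
have [f fS] := mo.2 S Sp.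
have phifull : forall i j, adjC i j = adjC (f (e i)) (f (e j)).
  by move=> i j; rewrite -efull fS.
have phiinj := pd_inj n5 phifull.
have [psi K1' K2'] := injF_bij phiinj.
have tw : forall w, w \in S -> twin e w (psi (f w)).
  move=> w wS l; rewrite fS //; transitivity (adjC (f (e (psi (f w)))) (f (e l))).
    by rewrite (K2' (f w)).
  by rewrite -fS // efull.
rewrite (gtP (tw u uS)) (gtP (tw v vS)) fS //.
transitivity (adjC (f (e (psi (f u)))) (f (e (psi (f v))))).
  by rewrite (K2' (f u)) (K2' (f v)).
by rewrite -fS // efull.
Qed.


Lemma e_inj (e : 'I_n -> vtx G) (efull : forall i j, adj (e i) (e j) = adjC i j) : injective e.
Proof. by apply: (pd_inj n5) => i j; rewrite efull. Qed.

Lemma proper_of (S : {set vtx G}) z : z \notin S -> S \proper setT.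
Proof. move=> zS; rewrite properT; apply/eqP => h; by rewrite h inE in zS. Qed.

Lemma Ltwo (e : 'I_n -> vtx G) (efull : forall i j, adj (e i) (e j) = adjC i j) x y :
  x \notin codom e -> y \notin codom e -> x != y ->
  (forall v, [|| v \in codom e, v == x | v == y]) ->
  adj x y != adjC (gt e x) (gt e y) -> False.
Proof.
move=> xT yT xy cover bad.
have [a Ha] : exists a, twin e x a.
  apply: (twin_of efull (S := [set v | (v \in codom e) || (v == x)])).
  - apply: (proper_of (z := y)); rewrite inE negb_or yT /= eq_sym //.
  - by move=> i; rewrite inE codom_f.
  - by rewrite inE eqxx orbT.
have [b Hb] : exists b, twin e y b.
  apply: (twin_of efull (S := [set v | (v \in codom e) || (v == y)])).
  - apply: (proper_of (z := x)); rewrite inE negb_or xT //.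
  - by move=> i; rewrite inE codom_f.
  - by rewrite inE eqxx orbT.
rewrite (gtP Ha) (gtP Hb) in bad.
pose e' l := if l == a then x else e l.
have e'full : forall i j, adj (e' i) (e' j) = adjC i j.
  move=> i j; rewrite /e'; case: (eqVneq i a) => [->|ia]; case: (eqVneq j a) => [->|ja].
  - by rewrite !adj_irr.
  - exact: Ha.
  - by rewrite adj_sym Ha adj_sym.
  - exact: efull.
have einj := e_inj efull.
have [c Hc] : exists c, twin e' y c.
  apply: (twin_of e'full (S := [set v | v != e a])).
  - apply: (proper_of (z := e a)); by rewrite inE eqxx.
  - move=> i; rewrite inE /e'; case: (eqVneq i a) => [_|ia].
      by apply: contra xT => /eqP ->; apply: codom_f.
    by rewrite (inj_eq einj).
  - by rewrite inE; apply: contra yT => /eqP ->; apply: codom_f.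
have bc : b = c.
  apply/eqP/negPn/negP => ne.
  apply: (K1 (a := a) n5 ne) => k ka.
  by rewrite -Hb -Hc /e' (negbTE ka).
have e1 : adj x y = adjC a b.
  rewrite adj_sym; transitivity (adj y (e' a)); first by rewrite /e' eqxx.
  by rewrite Hc -bc adj_sym.
by rewrite e1 eqxx in bad.
Qed.


Lemma Lone (e : 'I_n -> vtx G) (efull : forall i j, adj (e i) (e j) = adjC i j) x :
  x \notin codom e -> (forall j, ~ twin e x j) -> False.
Proof.
move=> xT notwin.
pose A := [set l | adj x (e l)].
have inA : forall l, (l \in A) = adj x (e l) by move=> l; rewrite inE.
have einj := e_inj efull.
have claim : forall k, (k \in A -> #|A| = 3) /\ (k \notin A -> (#|A| == 1) || (#|A| == 2)).
  move=> k.
  have Sp : [set v | v != e k] \proper setT.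
    by apply: (proper_of (z := e k)); rewrite inE eqxx.
  have [f fS] := mo.2 _ Sp.
  have inS : forall l, l != k -> e l \in [set v | v != e k].
    by move=> l lk; rewrite inE (inj_eq einj).
  have xS : x \in [set v | v != e k].
    by rewrite inE; apply: contra xT => /eqP ->; exact: codom_f.
  have phif : forall l l', l != k -> l' != k -> adjC l l' = adjC (f (e l)) (f (e l')).
    by move=> l l' hl hl'; rewrite -efull fS ?inS.
  have phii : forall l l', l != k -> l' != k -> f (e l) = f (e l') -> l = l'.
    move=> l l' hl hl' eq; apply/eqP/negPn/negP => ne; apply: (K1 (a := k) n5 ne) => m hm.
    by rewrite phif // eq -phif.
  have Ax : forall l, l != k -> (l \in A) = adjC (f x) (f (e l)).
    by move=> l hl; rewrite inA fS ?inS.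
  have cA := cardsD1 k A.
  case: (boolP [exists j, (j != k) && (f (e j) == f x)]).
  - case/existsP => j /andP [jk /eqP ej].
    have off : forall l, l != k -> (l \in A) = adjC j l.
      by move=> l hl; rewrite Ax // -ej -phif.
    have hk : (k \in A) = ~~ adjC j k.
      apply/eqP; apply/negP => /eqP hA; apply: (notwin j) => l.
      rewrite -inA; case: (eqVneq l k) => [->|hl]; last exact: off.
      by move: hA; case: (k \in A); case: (adjC j k).
    have DA : A :\ k = [set l | adjC j l] :\ k.
      apply/setP => l; rewrite !in_setD1; case: (eqVneq l k) => //= hl.
      by rewrite off // inE.
    have cN := cardsD1 k [set l | adjC j l].
    rewrite nbr_card // in cN.
    have e2 : (k \in [set l | adjC j l]) = adjC j k by rewrite inE.
    rewrite e2 -DA in cN; rewrite hk in cA.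
    rewrite hk; move: cA cN; case: (adjC j k) => cA cN; split => // _; lia.
  - move=> nex.
    have nim : forall j, j != k -> f (e j) != f x.
      by move=> j jk; apply: contra nex => h; apply/existsP; exists j; rewrite jk.
    pose phi := fun l => f (e l).
    pose Im := phi @: [set~ k].
    have cIm : #|Im| = n.-1.
      rewrite card_in_imset ?cardsC1 ?card_ord // => l l'; rewrite !in_setC1 => hl hl'.
      exact: phii.
    have Imw : Im = [set~ f x].
      apply/eqP; rewrite eqEcard cardsC1 card_ord cIm leqnn andbT.
      apply/subsetP => u /imsetP [l]; rewrite in_setC1 => hl ->; rewrite in_setC1; exact: nim.
    have DA : phi @: (A :\ k) = [set u | adjC (f x) u].
      apply/setP => u; rewrite inE; apply/imsetP/idP.
      - by case=> l; rewrite in_setD1 => /andP [hl lA] ->; rewrite -Ax.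
      - move=> hu.
        have : u \in Im.
          by rewrite Imw in_setC1; apply: contraTneq hu => ->; rewrite adj_irr.
        case/imsetP => l; rewrite in_setC1 => hl eu; subst u. exists l => //.
        by rewrite in_setD1 hl /= (Ax _ hl).
    have cD : #|A :\ k| = 2.
      rewrite -(nbr_card (f x) n5) -DA card_in_imset // => l l'.
      rewrite !in_setD1 => /andP[hl _] /andP[hl' _]; exact: phii.
    rewrite cD in cA.
    split => h; rewrite cA ?h //; by rewrite (negbTE h).
have [h0|h0] := boolP ((ord0 : 'I_n) \in A).
- have c3 := (claim ord0).1 h0.
  have allA : forall k, k \in A.
    move=> k; apply/negPn/negP => hk; have := (claim k).2 hk; by rewrite c3.
  have AT : A = setT by apply/setP => k; rewrite in_setT allA.
  move: c3; rewrite AT cardsT card_ord; lia.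
- have c12 := (claim ord0).2 h0.
  have : 0 < #|A| by lia.
  case/card_gt0P => k kA; have := (claim k).1 kA; lia.
Qed.


Lemma no_induced (e : 'I_n -> vtx G) (efull : forall i j, adj (e i) (e j) = adjC i j) : False.
Proof.
have gte : forall i, gt e (e i) = i by move=> i; apply: gtP => l; exact: efull.
have [x [y bad]] : exists x y, adj x y != adjC (gt e x) (gt e y).
  case: (classic (exists x y, adj x y != adjC (gt e x) (gt e y))) => // nex.
  exfalso; apply: mo.1; exists (gt e) => x y; apply/eqP/negPn/negP => h.
  by apply: nex; exists x, y.
pose S := [set v | [|| v \in codom e, v == x | v == y]].
case: (eqVneq S setT) => [ST|SnT]; last first.
  move/negP: bad; apply; apply/eqP; apply: (pair_ok efull (S := S)).
  - by rewrite properT.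
  - by move=> i; rewrite inE codom_f.
  - by rewrite inE eqxx orbT.
  - by rewrite inE eqxx !orbT.
have cover : forall v, [|| v \in codom e, v == x | v == y].
  by move=> v; have := in_setT v; rewrite -ST inE.
case: (boolP (x \in codom e)) => [/codomP [i exi]|xT]; rewrite ?exi in bad;
  case: (boolP (y \in codom e)) => [/codomP [j eyj]|yT]; rewrite ?eyj in bad.
- by rewrite !gte efull eqxx in bad.
- apply: (Lone efull yT) => jj tw; move: bad; rewrite (gtP tw) gte adj_sym.
  by rewrite (tw i) adj_sym eqxx.
- apply: (Lone efull xT) => jj tw; move: bad; rewrite (gtP tw) gte.
  by rewrite (tw j) eqxx.
- case: (eqVneq x y) => [exy|nxy].
    by move: bad; rewrite exy !adj_irr.
  exact: (Ltwo efull xT yT nxy cover bad).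
Qed.

End L.

Section M.
Variables (p : nat) (hp : 3 <= p).
Local Notation n := p.+2.
Local Notation C := (cycle_graph p.+2).
Local Notation P := (path_graph p.+1).
Local Notation adjC := (@adj (cycle_graph p.+2)).
Local Notation adjP := (@adj (path_graph p.+1)).
Let n5 : 5 <= n. Proof. lia. Qed.

Definition wid (i : 'I_p.+1) : 'I_p.+2 := widen_ord (leqnSn _) i.

Lemma emb_full (i j : 'I_p.+1) : adjP i j = adjC (wid i) (wid j).
Proof.
rewrite adjPE adjCE /=; last lia.
have := ltn_ord i; have := ltn_ord j; move: (i:nat) (j:nat) => a b *.
apply/idP/idP; lia.
Qed.

Lemma F2 (m : 'I_p.+2) : exists h : 'I_p.+2 -> 'I_p.+1,
  forall i j, i != m -> j != m -> adjC i j = adjP (h i) (h j).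
Proof.
pose hv (i : 'I_p.+2) := if m < i then i - m.+1 else i + p.+2 - m.+1.
have hvb : forall i : 'I_p.+2, i != m -> hv i < p.+1.
  move=> i im; have := ltn_ord i; have := ltn_ord m.
  have : (i:nat) != m by []. rewrite /hv; case: ifP => /=; lia.
exists (fun i => inord (hv i)) => i j im jm.
rewrite adjPE adjCE; last lia.
rewrite !inordK ?hvb //.
have := hvb i im; have := hvb j jm.
have : (i:nat) != m by []. have : (j:nat) != m by [].
have := ltn_ord i; have := ltn_ord m; have := ltn_ord j.
rewrite /hv; case: ifP; case: ifP => /=; move=> *; apply/idP/idP; lia.
Qed.

Lemma F2_on (G : sgraph) (S : {set vtx G}) (f : vtx G -> vtx C)
  (fS : forall x y, x \in S -> y \in S -> adj x y = adj (f x) (f y)) (m : 'I_p.+2)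
  (nm : forall x, x \in S -> f x != m) : full_colourable_on P S.
Proof.
have [h hh] := F2 m; exists (fun x => h (f x)) => x y xS yS.
by rewrite fS // hh ?nm.
Qed.

Lemma emb_on (G : sgraph) (S : {set vtx G}) : full_colourable_on P S -> full_colourable_on C S.
Proof.
case=> g gS; exists (fun x => wid (g x)) => x y xS yS.
by rewrite gS // emb_full.
Qed.

Lemma not_PC (g : 'I_p.+2 -> 'I_p.+1) : ~ (forall i j, adjC i j = adjP (g i) (g j)).
Proof.
move=> H; have gi := pd_inj (X := P) n5 H.
have := @leq_card _ _ g gi; rewrite !card_ord; lia.
Qed.

Lemma surj_embed (G : sgraph) (S : {set vtx G}) (f : vtx G -> vtx C)
  (fS : forall x y, x \in S -> y \in S -> adj x y = adj (f x) (f y))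
  (sur : forall m : 'I_p.+2, exists2 x, x \in S & f x = m) :
  exists e : 'I_p.+2 -> vtx G, [/\ forall i, e i \in S,
    forall i j, adj (e i) (e j) = adjC i j & forall i, f (e i) = i].
Proof.
have [x0 _ _] := sur ord0.
pose e i := odflt x0 [pick x in S | f x == i].
have eP : forall i, e i \in S /\ f (e i) = i.
  move=> i; rewrite /e; case: pickP => [x /andP [xS /eqP fx]|none] //=.
  have [x xS fx] := sur i; by move: (none x); rewrite xS fx eqxx.
exists e; split.
- by move=> i; case: (eP i).
- move=> i j; case: (eP i) => iS fi; case: (eP j) => jS fj.
  by rewrite fS // fi fj.
- by move=> i; case: (eP i).
Qed.

Lemma claim1_fwd (G : sgraph) : min_obstruction C G ->
  min_obstruction P G /\ ~ graph_iso G C.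
Proof.
move=> mo; split; last first.
  by case=> f [_ ff]; apply: mo.1; exists f.
split.
  case=> g gf; apply: mo.1; exists (fun x => wid (g x)) => x y.
  by rewrite gf emb_full.
move=> S Sp; have [f fS] := mo.2 S Sp.
case: (classic (exists m : 'I_p.+2, forall x, x \in S -> f x != m)) => [[m nm]|nex].
  exact: (F2_on fS nm).
have sur : forall m : 'I_p.+2, exists2 x, x \in S & f x = m.
  move=> m; case: (classic (exists2 x, x \in S & f x = m)) => // h.
  exfalso; apply: nex; exists m => x xS; apply/eqP => fx; apply: h; by exists x.
have [e [_ efull _]] := surj_embed fS sur.
exfalso; exact: (no_induced hp mo efull).
Qed.

Lemma claim1_bwd (G : sgraph) : min_obstruction P G -> ~ graph_iso G C ->
  min_obstruction C G.
Proof.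
move=> mo niso; split; last first.
  by move=> S Sp; apply: emb_on; apply: mo.2.
case=> f ff.
have fS : forall x y, x \in [set: vtx G] -> y \in [set: vtx G] -> adj x y = adj (f x) (f y).
  by move=> x y _ _; apply: ff.
case: (classic (exists m : 'I_p.+2, forall x, x \in [set: vtx G] -> f x != m)) => [[m nm]|nex].
  have [g gS] := F2_on fS nm; apply: mo.1; exists g => x y; exact: gS.
have sur : forall m : 'I_p.+2, exists2 x, x \in [set: vtx G] & f x = m.
  move=> m; case: (classic (exists2 x, x \in [set: vtx G] & f x = m)) => // h.
  exfalso; apply: nex; exists m => x xS; apply/eqP => fx; apply: h; by exists x.
have [e [_ efull fe]] := surj_embed fS sur.
case: (classic (forall v, v \in codom e)) => [cov|ncov].
  apply: niso; exists f; split => //.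
  exists e => //= v; have /codomP [i ->] := cov v; by rewrite fe.
have [z zT] : exists z, z \notin codom e.
  case: (classic (exists z, z \notin codom e)) => // h; exfalso; apply: ncov => v.
  by apply/negPn/negP => hv; apply: h; exists v.
have Tp : [set u | u \in codom e] \proper setT.
  by rewrite properT; apply/eqP => h; move: (in_setT z); rewrite -h inE (negbTE zT).
have [h hS] := mo.2 _ Tp.
apply: (@not_PC (fun i => h (e i))) => i j.
by rewrite -efull hS // inE codom_f.
Qed.

Lemma iso_C (G : sgraph) : graph_iso G C -> min_obstruction P G.
Proof.
case=> f [[finv fK Kf] ff]; split.
  case=> g gf; apply: (@not_PC (fun a => g (finv a))) => a b.
  by rewrite -gf ff !Kf.
move=> S Sp.
have [z zS] : exists z, z \notin S.
  case: (classic (exists z, z \notin S)) => // h; exfalso.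
  move: Sp; rewrite properT => /eqP; apply; apply/setP => v; rewrite in_setT.
  by apply/negPn/negP => hv; apply: h; exists v.
apply: (@F2_on G S f _ (f z)).
  by move=> x y _ _; apply: ff.
move=> x xS; apply/eqP => /(can_inj fK) exz; by rewrite -exz xS in zS.
Qed.

End M.

Theorem corollary3p9 (n : nat) : 5 <= n ->
  (forall G : sgraph,
     min_obstruction (cycle_graph n) G <->
     (min_obstruction (path_graph (n - 1)) G /\ ~ graph_iso G (cycle_graph n))) /\
  (forall G : sgraph,
     min_obstruction (path_graph (n - 1)) G <->
     (min_obstruction (cycle_graph n) G \/ graph_iso G (cycle_graph n))).
Proof.
case: n => [|[|p]] // h5.
have hp : 3 <= p by lia.
have -> : p.+2 - 1 = p.+1 by rewrite subn1.
split => G; split.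
- exact: claim1_fwd hp G.
- by case=> mo ni; apply: claim1_bwd.
- move=> mo; case: (classic (graph_iso G (cycle_graph p.+2))) => [i|ni].
    by right.
  by left; apply: claim1_bwd.
- case=> [mo|i].
    exact: (claim1_fwd hp mo).1.
  exact: iso_C.
Qed.
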